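(* Let $\Theta=\{\theta_0,\ldots,\theta_n\}\subset\mathbb{R}$ and let $F$ and $G$ be experiments with signal spaces $\mathcal{X}=[\underline{x},\overline{x}]$ and $\mathcal{Y}=[\underline{y},\overline{y}]$ and conditional densities $f(\cdot\mid\theta)$, $g(\cdot\mid\theta)$. Then $F\succeq_{\textup{LB}}G$ if and only if, for every $\boldsymbol{b}=(b_0,\ldots,b_n)\in\mathbb{R}^{n+1}$, \[ \int_{\mathcal{X}}\Big(\sum_{i=0}^{n} b_i f(x\mid\theta_i)\Big)_{+}\,dx\;\geq\;\int_{\mathcal{Y}}\Big(\sum_{i=0}^{n} b_i g(y\mid\theta_i)\Big)_{+}\,dy, \] where $(s)_+=\max(s,0)$.
   Context: States: $\Theta=\{\theta_0,\ldots,\theta_n\}\subset\mathbb{R}$. An experiment $F$ specifies, for each $\theta\in\Theta$, an absolutely continuous distribution $F(\cdot\mid\theta)$ with density $f(\cdot\mid\theta)$ of a signal $X$ taking values in a compact interval $\mathcal{X}=[\underline{x},\overline{x}]$; similarly $G$ has densities $g(\cdot\mid\theta)$ on $\mathcal{Y}=[\underline{y},\overline{y}]$ for a signal $Y$. Let $\widehat{\Delta}_n=\{\boldsymbol{q}\in[0,1]^n:\sum_{i=1}^n q_i\le 1\}$; a prior $\boldsymbol{q}=(q_1,\ldots,q_n)\in\widehat{\Delta}_n$ assigns probability $q_i$ to $\theta_i$ ($i\ge1$) and $q_0=1-\sum_{i=1}^n q_i$ to $\theta_0$. Given $\boldsymbol{q}$, $f_{\boldsymbol{q}}=\sum_{i=0}^n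 q_i f(\cdot\mid\theta_i)$ is the unconditional density of $X$ (distribution $F_{\boldsymbol{q}}$), and the posterior vector is $\boldsymbol{p}_F(x;\boldsymbol{q})=(p_{F,1}(x;\boldsymbol{q}),\ldots,p_{F,n}(x;\boldsymbol{q}))$ with $p_{F,i}(x;\boldsymbol{q})=q_i f(x\mid\theta_i)/f_{\boldsymbol{q}}(x)$; $\boldsymbol{p}_F(\boldsymbol{q})$ denotes the random vector $\boldsymbol{p}_F(X;\boldsymbol{q})$ with $X\sim F_{\boldsymbol{q}}$ (analogously for $G$). For random vectors $\boldsymbol{\mu},\boldsymbol{\nu}$ in $\mathbb{R}^n$ with equal means: $\boldsymbol{\mu}\succeq_{\textup{cx}}\boldsymbol{\nu}$ (convex order) if $\mathbb{E}[C(\boldsymbol{\mu})]\ge\mathbb{E}[C(\boldsymbol{\nu})]$ for all convex $C:\mathbb{R}^n\to\mathbb{R}$; $\boldsymbol{\mu}\succeq_{\textup{lcx}}\boldsymbol{\nu}$ (linear convex order) if $\boldsymbol{b}\cdot\boldsymbol{\mu}\succeq_{\textup{cx}}\boldsymbol{b}\cdot\boldsymbol{\nu}$ for all $\boldsymbol{b}\in\mathbb{R}^n$. The linear-Blackwell order: $F\succeq_{\textup{LB}}G$ if $\boldsymbol{p}_F(\boldsymbol{q})\succeq_{\textup{lcx}}\boldsymbol{p}_G(\boldsymbol{q})$ for every $\boldsymbol{q}\in\widehat{\Delta}_n$. *)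

(* Defs.v *)
From mathcomp Require Import all_boot all_order all_algebra.
From mathcomp Require Import all_classical all_reals all_analysis.
Set Implicit Arguments. Unset Strict Implicit. Unset Printing Implicit Defensive.
Import Order.TTheory GRing.Theory Num.Theory.
Local Open Scope classical_set_scope.
Local Open Scope ring_scope.

Section Blackwell.
Variable R : realType.

Definition is_experiment (n : nat) (a b : R) (f : 'I_n.+1 -> R -> R) : Prop :=
  a < b /\
  forall i : 'I_n.+1,
    measurable_fun `[a, b]%classic (f i) /\
    (forall x, a <= x <= b -> 0 <= f i x) /\
    (\int[lebesgue_measure]_(x in `[a, b]%classic) (f i x)%:E = 1)%E.

(* priors q = (q_1,..,q_n) in \hat{Delta}_n, indexed by 'I_n;
   q_j is the probability of theta_{j+1} *)
Definition in_hat_simplex (n : nat) (q : 'I_n -> R) : Prop :=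
  (forall j, 0 <= q j) /\ \sum_(j < n) q j <= 1.

Definition full_prior (n : nat) (q : 'I_n -> R) (i : 'I_n.+1) : R :=
  match unlift ord0 i with
  | Some j => q j
  | None => 1 - \sum_(j < n) q j
  end.

Definition mix_density (n : nat) (f : 'I_n.+1 -> R -> R) (q : 'I_n -> R)
  (x : R) : R :=
  \sum_(i < n.+1) full_prior q i * f i x.

Definition posterior (n : nat) (f : 'I_n.+1 -> R -> R) (q : 'I_n -> R)
  (j : 'I_n) (x : R) : R :=
  q j * f (lift ord0 j) x / mix_density f q x.

Definition expect_on (a b : R) (dens : R -> R) (h : R -> R) : \bar R :=
  (\int[lebesgue_measure]_(x in `[a, b]%classic) (h x * dens x)%:E)%E.

Definition convex_fun (C : R -> R) : Prop :=
  forall (x y t : R), 0 <= t <= 1 ->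
    C (t * x + (1 - t) * y) <= t * C x + (1 - t) * C y.

Definition cx_ge (a1 b1 : R) (dens1 : R -> R) (U : R -> R)
                 (a2 b2 : R) (dens2 : R -> R) (V : R -> R) : Prop :=
  forall C : R -> R, convex_fun C ->
    (expect_on a2 b2 dens2 (C \o V) <= expect_on a1 b1 dens1 (C \o U))%E.

Definition lcx_ge (n : nat) (a1 b1 : R) (dens1 : R -> R) (U : 'I_n -> R -> R)
                 (a2 b2 : R) (dens2 : R -> R) (V : 'I_n -> R -> R) : Prop :=
  (forall j, expect_on a1 b1 dens1 (U j) = expect_on a2 b2 dens2 (V j)) /\
  forall bb : 'I_n -> R,
    cx_ge a1 b1 dens1 (fun x => \sum_(j < n) bb j * U j x)
          a2 b2 dens2 (fun y => \sum_(j < n) bb j * V j y).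

Definition LB_ge (n : nat) (xl xu : R) (f : 'I_n.+1 -> R -> R)
                 (yl yu : R) (g : 'I_n.+1 -> R -> R) : Prop :=
  forall q : 'I_n -> R, in_hat_simplex q ->
    lcx_ge xl xu (mix_density f q) (posterior f q)
           yl yu (mix_density g q) (posterior g q).

End Blackwell.

(* Main.v *)
Require Import Defs.
From mathcomp Require Import all_boot all_order all_algebra.
From mathcomp Require Import all_classical all_reals all_analysis.
From mathcomp Require Import ring lra.
Import Order.TTheory GRing.Theory Num.Theory.
Local Open Scope classical_set_scope.
Local Open Scope ring_scope.

Section Approx.
Variable R : realFieldType.
Variable C : R -> R.
Hypothesis hC : forall x y t : R, 0 <= t <= 1 ->
    C (t * x + (1 - t) * y) <= t * C x + (1 - t) * C y.

Lemma cvxW x y z : x <= y -> y <= z ->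
  (z - x) * C y <= (z - y) * C x + (y - x) * C z.
Proof.
move=> xy yz.
have [exz|nxz] := eqVneq x z.
  have eyx : y = x by apply/eqP; rewrite eq_le xy; rewrite exz yz.
  by rewrite eyx exz !subrr !mul0r addr0.
have xz : 0 < z - x by rewrite subr_gt0 lt_neqAle nxz (le_trans xy yz).
pose t := (z - y) / (z - x).
have t0 : 0 <= t by apply: divr_ge0; [rewrite subr_ge0 | exact: ltW].
have t1 : t <= 1 by rewrite ler_pdivrMr // mul1r lerD2l lerN2.
have ey : y = t * x + (1 - t) * z by rewrite /t; field; rewrite lt0r_neq0.
have H : C (t * x + (1 - t) * z) <= t * C x + (1 - t) * C z by apply: hC; rewrite t0 t1.
rewrite -ey in H.
have := ler_wpM2l (ltW xz) H.
suff -> : (z - x) * (t * C x + (1 - t) * C z) = (z - y) * C x + (y - x) * C z by [].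
rewrite /t; field; rewrite lt0r_neq0 //.
Qed.

Definition sl x y := (C y - C x) / (y - x).

Lemma sl1 x y z : x < y -> y <= z -> sl x y <= sl x z.
Proof.
move=> xy yz; have xz := lt_le_trans xy yz.
rewrite /sl ler_pdivrMr ?subr_gt0 // mulrAC ler_pdivlMr ?subr_gt0 //.
have := @cvxW x y z (ltW xy) yz; lra.
Qed.

Lemma sl2 x y z : x <= y -> y < z -> sl x z <= sl y z.
Proof.
move=> xy yz; have xz := le_lt_trans xy yz.
rewrite /sl ler_pdivrMr ?subr_gt0 // mulrAC ler_pdivlMr ?subr_gt0 //.
have := @cvxW x y z xy (ltW yz); lra.
Qed.

Lemma sl_mono x y x' y' : x < y -> x' < y' -> x <= x' -> y <= y' ->
  sl x y <= sl x' y'.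
Proof.
move=> xy xy' xx yy; apply: (le_trans (@sl1 _ _ _ xy yy)); exact: sl2.
Qed.

Variables (B h : R).
Hypothesis h0 : 0 < h.

Definition tg (k : nat) : R := - B + k%:R * h.
Definition sg (k : nat) : R := (C (tg k.+1) - C (tg k)) / h.
Definition Lk (k : nat) (u : R) : R := C (tg k) + sg k * (u - tg k).
Definition psi (K : nat) (u : R) : R :=
  C (tg 0) + sg 0 * (u - tg 0) +
  \sum_(k < K) (sg k.+1 - sg k) * Num.max (u - tg k.+1) 0.

Lemma tg_le a b : (a <= b)%N -> tg a <= tg b.
Proof. by move=> ab; rewrite /tg lerD2l; apply: ler_wpM2r; [exact: ltW | rewrite ler_nat]. Qed.

Lemma tgS k : tg k.+1 = tg k + h.
Proof. by rewrite /tg -addn1 natrD; ring. Qed.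

Lemma tg_lt k : tg k < tg k.+1.
Proof. by rewrite tgS ltrDl. Qed.

Lemma sg_sl k : sg k = sl (tg k) (tg k.+1).
Proof. by rewrite /sl /sg; congr (_ / _); rewrite tgS; ring. Qed.

Lemma sg_mono k : sg k <= sg k.+1.
Proof.
rewrite !sg_sl; apply: sl_mono; rewrite ?tg_lt //; exact: ltW (tg_lt _).
Qed.

Lemma psiS K u : psi K.+1 u = psi K u + (sg K.+1 - sg K) * Num.max (u - tg K.+1) 0.
Proof. by rewrite /psi big_ord_recr /= addrA. Qed.

Lemma psiQ K u : tg K <= u -> psi K u = Lk K u.
Proof.
elim: K u => [|K IH] u hu.
  by rewrite /psi big_ord0 addr0.
have hK : tg K <= u by apply: le_trans hu; exact: ltW (tg_lt _).
rewrite psiS IH // /Lk.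
have -> : Num.max (u - tg K.+1) 0 = u - tg K.+1.
  by apply/max_idPl; rewrite subr_ge0.
have e : C (tg K.+1) = C (tg K) + sg K * h.
  by rewrite /sg mulfVK ?lt0r_neq0 //; ring.
rewrite e tgS; ring.
Qed.

Lemma psiP K j u : (j <= K)%N -> tg j <= u <= tg j.+1 -> psi K u = Lk j u.
Proof.
elim: K j => [|K IH] j.
  by rewrite leqn0 => /eqP -> /andP[h1 _]; rewrite psiQ.
rewrite leq_eqVlt => /orP[/eqP -> /andP[h1 _]|]; first by rewrite psiQ.
rewrite ltnS => jK /andP[h1 h2]; rewrite psiS (IH j) ?h1 ?h2 //.
have -> : Num.max (u - tg K.+1) 0 = 0.
  by apply/max_idPr; rewrite subr_le0 (le_trans h2) // tg_le.
by rewrite mulr0 addr0.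
Qed.

Lemma cover K u : tg 0 <= u <= tg K.+1 ->
  exists j, (j <= K)%N /\ tg j <= u <= tg j.+1.
Proof.
elim: K => [|K IH] /andP[h1 h2]; first by exists 0%N; rewrite h1 h2.
have [hu|hu] := leP u (tg K.+1).
  by have [j [jK hj]] := IH (introT andP (conj h1 hu)); exists j; split => //; exact: leqW.
by exists K.+1; rewrite (ltW hu) h2.
Qed.

Lemma Lk_ge j u : tg j <= u <= tg j.+1 -> C u <= Lk j u.
Proof.
move=> /andP[h1 h2]; have := @cvxW _ _ _ h1 h2.
rewrite tgS /Lk /sg tgS => H.
rewrite -(ler_pM2l h0).
have -> : h * (C (tg j) + (C (tg j + h) - C (tg j)) / h * (u - tg j)) =
   (tg j + h - u) * C (tg j) + (u - tg j) * C (tg j + h).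
  by field; rewrite lt0r_neq0.
move: H; have -> : tg j + h - tg j = h by ring.
by [].
Qed.

Lemma approx K u : tg 0 <= u <= tg K.+1 ->
  C u <= psi K u /\
  psi K u <= C u + (sl (tg K.+1) (tg K.+1 + 1) - sl (tg 0 - 1) (tg 0)) * h.
Proof.
move=> hu; have [j [jK hj]] := @cover K u hu.
rewrite (@psiP K j u jK hj); split; first exact: (@Lk_ge j u hj).
move: hu hj => /andP[h01 h02] /andP[h1 h2].
have t0j : tg 0 <= tg j by apply: tg_le.
have m1 : tg 0 - 1 < tg 0 by rewrite ltrBlDr ltrDl ltr01.
have m2 : tg K.+1 < tg K.+1 + 1 by rewrite ltrDl ltr01.
have sj : sg j <= sl (tg K.+1) (tg K.+1 + 1).
  rewrite sg_sl; apply: sl_mono; rewrite ?tg_lt //.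
    by apply: tg_le; apply: leqW.
  apply: (le_trans (@tg_le j.+1 K.+1 jK)).
  by rewrite lerDl ler01.
have sj2 : sl (tg 0 - 1) (tg 0) <= sg j.
  rewrite sg_sl; apply: sl_mono; rewrite ?tg_lt //.
    by rewrite (le_trans _ t0j) // lerBlDr lerDl ler01.
  by apply: tg_le.
have uh : u - tg j <= h by rewrite lerBlDl -tgS.
rewrite /Lk.
have [ej|nj] := eqVneq u (tg j).
  rewrite ej subrr mulr0 addr0 lerDl; apply: mulr_ge0; last exact: ltW.
  by rewrite subr_ge0 (le_trans sj2 sj).
have lj : tg j < u by rewrite lt_neqAle eq_sym nj h1.
have slo : sl (tg 0 - 1) (tg 0) <= sl (tg j) u.
  apply: sl_mono => //.
  by rewrite (le_trans _ t0j) // lerBlDr lerDl ler01.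
have eC : C u = C (tg j) + sl (tg j) u * (u - tg j).
  by rewrite /sl mulfVK ?subr_eq0 //; ring.
rewrite eC.
have p0 : 0 <= u - tg j by rewrite subr_ge0.
nra.
Qed.
End Approx.

Lemma le_integral_nm (R : realType) (D : set R) (f g : R -> \bar R) :
  (forall x, D x -> (f x <= g x)%E) ->
  (\int[lebesgue_measure]_(x in D) f x <= \int[lebesgue_measure]_(x in D) g x)%E.
Proof.
move=> fg; rewrite /integral /=.
have fgD := lee_restrict fg.
apply: leeB; apply: ereal_sup_le => _ [h hh <-]; exists h => // x.
  apply: (le_trans (hh x)).
  by apply: (@funepos_le _ _ setT); [move=> y _; exact: fgD | exact: in_setT].
apply: (le_trans (hh x)).
by apply: (@funeneg_le _ _ setT); [move=> y _; exact: fgD | exact: in_setT].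
Qed.

Definition ext {R : realType} {n : nat} (bb : 'I_n -> R) (i : 'I_n.+1) : R :=
  match unlift ord0 i with Some j => bb j | None => 0 end.
Definition Uf {R : realType} {n : nat} (f : 'I_n.+1 -> R -> R) (q bb : 'I_n -> R)
  (x : R) : R := \sum_(j < n) bb j * posterior f q j x.
Definition cc {R : realType} {n : nat} (q bb : 'I_n -> R) (al be : R) (i : 'I_n.+1) : R :=
  full_prior q i * (al + be * ext bb i).
Definition ramp {R : realType} (al be u : R) : R := Num.max (al + be * u) 0.
Definition phi {R : realType} (s : seq (R * R * R)) (u : R) : R :=
  \sum_(k <- s) k.1.1 * ramp k.1.2 k.2 u.

Lemma fp_ge0 {R : realType} {n : nat} (q : 'I_n -> R) : in_hat_simplex q -> forall i, 0 <= full_prior q i.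
Proof.
move=> [q0 q1] i; rewrite /full_prior; case: (unlift ord0 i) => [j|]; first exact: q0.
by rewrite subr_ge0.
Qed.

Lemma fp_lift {R : realType} {n : nat} (q : 'I_n -> R) j : full_prior q (lift ord0 j) = q j.
Proof. by rewrite /full_prior liftK. Qed.

Lemma fp_ord0 {R : realType} {n : nat} (q : 'I_n -> R) : full_prior q ord0 = 1 - \sum_(j < n) q j.
Proof. by rewrite /full_prior unlift_none. Qed.

Lemma fp_sum {R : realType} {n : nat} (q : 'I_n -> R) : \sum_(i < n.+1) full_prior q i = 1.
Proof.
rewrite big_ord_recl fp_ord0 (eq_bigr _ (fun j _ => fp_lift q j)).
by rewrite subrK.
Qed.

Section Exp.
Variables (R : realType) (n : nat) (a b : R) (f : 'I_n.+1 -> R -> R).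
Hypothesis hf : is_experiment a b f.
Local Notation D := (`[a, b]%classic : set R).
Local Notation mu := (@lebesgue_measure R).

Lemma mD : measurable D. Proof. exact: measurable_itv. Qed.

Lemma f_ge0 i x : D x -> 0 <= f i x.
Proof.
move=> Dx; have [_ /(_ i) [_ [h _]]] := hf; apply: h.
by move: Dx; rewrite /= in_itv.
Qed.

Lemma f_meas i : measurable_fun D (f i).
Proof. by have [_ /(_ i) [h _]] := hf. Qed.

Lemma f_int1 i : (\int[mu]_(x in D) (f i x)%:E = 1)%E.
Proof. by have [_ /(_ i) [_ [_ h]]] := hf. Qed.

Lemma f_int i : mu.-integrable D (EFin \o f i).
Proof.
apply/integrableP; split; first by apply/measurable_realfun.measurable_EFinP; exact: f_meas.
have -> : (\int[mu]_(x in D) `|(EFin \o f i) x| = \int[mu]_(x in D) (f i x)%:E)%E.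
  apply: eq_integral => x; rewrite inE => Dx /=.
  by rewrite ger0_norm //; exact: f_ge0.
by rewrite f_int1 ltry.
Qed.

Lemma sum_meas (c : 'I_n.+1 -> R) :
  measurable_fun D (fun x => \sum_(i < n.+1) c i * f i x).
Proof.
apply: (@measurable_sum _ _ R D _ _ (fun i x => c i * f i x)) => i.
exact: (@measurable_realfun.measurable_funM _ _ R D (fun=> c i) (f i) (measurable_cst _) (f_meas i)).
Qed.

Lemma lin_int (c : 'I_n.+1 -> R) :
  mu.-integrable D (fun x => (Num.max (\sum_(i < n.+1) c i * f i x) 0)%:E).
Proof.
apply: (@le_integrable _ _ _ mu D mD _
   (fun x => (\sum_(i < n.+1) `|c i| * f i x)%:E)).
- apply/measurable_realfun.measurable_EFinP.
  exact: (measurable_realfun.measurable_maxr (sum_meas c) (measurable_cst _)).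
- move=> x Dx /=; rewrite lee_fin.
  have h0 : 0 <= \sum_(i < n.+1) `|c i| * f i x.
    by apply: sumr_ge0 => i _; apply: mulr_ge0 => //; exact: f_ge0.
  rewrite (ger0_norm h0) ger0_norm ?le_max ?lexx ?orbT //.
  rewrite ge_max h0 andbT; apply: ler_sum => i _.
  by apply: ler_wpM2r; [exact: f_ge0 | exact: ler_norm].
- apply: (@eq_integrable _ _ _ mu D mD (fun x => \sum_(i < n.+1) (`|c i| * f i x)%:E)).
    by move=> x _; rewrite sumEFin.
  apply: (@integrable_sum _ _ _ mu D mD) => i _.
  apply: (@eq_integrable _ _ _ mu D mD (fun x => ((`|c i|)%:E * (EFin \o f i) x)%E)).
    by move=> x _.
  apply: integrableZl; [exact: mD | exact: f_int].
Qed.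

Lemma pos_int (c : 'I_n.+1 -> R) : (forall i, 0 <= c i) ->
  (\int[mu]_(x in D) (Num.max (\sum_(i < n.+1) c i * f i x) 0)%:E
   = (\sum_(i < n.+1) c i)%:E)%E.
Proof.
move=> c0.
transitivity (\int[mu]_(x in D) (\sum_(i < n.+1) ((c i)%:E * (EFin \o f i) x)%E))%E.
  apply: eq_integral => x; rewrite inE => Dx /=.
  rewrite sumEFin; congr EFin; apply/max_idPl.
  by apply: sumr_ge0 => i _; apply: mulr_ge0 => //; exact: f_ge0.
rewrite (@integral_sum _ _ _ mu D mD _ (fun i x => ((c i)%:E * (EFin \o f i) x)%E)); last first.
  move=> i; apply: integrableZl; [exact: mD | exact: f_int].
rewrite -sumEFin; apply: eq_bigr => i _.
by rewrite integralZl; [rewrite f_int1 mule1 | exact: mD | exact: f_int].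
Qed.


Lemma mix_ge0 q x : in_hat_simplex q -> D x -> 0 <= mix_density f q x.
Proof.
move=> hq Dx; apply: sumr_ge0 => i _; apply: mulr_ge0; [exact: fp_ge0 | exact: f_ge0].
Qed.

Lemma fp_f0 q x : in_hat_simplex q -> D x -> mix_density f q x = 0 ->
  forall i, full_prior q i * f i x = 0.
Proof.
move=> hq Dx m0 i.
apply: (@psumr_eq0P _ _ predT (fun i => full_prior q i * f i x)) => //.
by move=> k _; apply: mulr_ge0; [exact: fp_ge0 | exact: f_ge0].
Qed.

Lemma sumS q bb x : \sum_(j < n) bb j * (q j * f (lift ord0 j) x)
  = \sum_(i < n.+1) full_prior q i * ext bb i * f i x.
Proof.
rewrite [RHS]big_ord_recl /ext unlift_none mulr0 mul0r add0r.
by apply: eq_bigr => j _; rewrite fp_lift liftK; ring.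
Qed.

Lemma key q bb al be x : in_hat_simplex q -> D x ->
  ramp al be (Uf f q bb x) * mix_density f q x
  = Num.max (\sum_(i < n.+1) cc q bb al be i * f i x) 0.
Proof.
move=> hq Dx.
have e1 : \sum_(i < n.+1) cc q bb al be i * f i x
    = al * mix_density f q x + be * \sum_(j < n) bb j * (q j * f (lift ord0 j) x).
  rewrite sumS /cc /mix_density !mulr_sumr -big_split; apply: eq_bigr => i _ /=; ring.
rewrite e1 /ramp.
have [m0|mne] := eqVneq (mix_density f q x) 0.
  have -> : \sum_(j < n) bb j * (q j * f (lift ord0 j) x) = 0.
    by apply: big1 => j _; rewrite -(fp_lift q) (@fp_f0 q x hq Dx m0) mulr0.
  by rewrite m0 !mulr0 addr0 maxxx.
have mpos : 0 < mix_density f q x by rewrite lt0r mne (@mix_ge0 q x hq Dx).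
have eU : Uf f q bb x * mix_density f q x = \sum_(j < n) bb j * (q j * f (lift ord0 j) x).
  rewrite /Uf mulr_suml; apply: eq_bigr => j _; rewrite /posterior.
  by rewrite -!mulrA mulVf // mulr1.
rewrite -eU mulrC maxr_pMr ?(ltW mpos) // mulr0; congr (Num.max _ _); ring.
Qed.

Lemma post_ge0 q j x : in_hat_simplex q -> D x -> 0 <= posterior f q j x.
Proof.
move=> hq Dx; rewrite /posterior; apply: divr_ge0; last exact: mix_ge0.
apply: mulr_ge0; [by case: hq | exact: f_ge0].
Qed.

Lemma post_le1 q j x : in_hat_simplex q -> D x -> posterior f q j x <= 1.
Proof.
move=> hq Dx; rewrite /posterior.
have [m0|mne] := eqVneq (mix_density f q x) 0; first by rewrite m0 invr0 mulr0 ler01.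
have mpos : 0 < mix_density f q x by rewrite lt0r mne (@mix_ge0 q x hq Dx).
rewrite ler_pdivrMr // mul1r /mix_density (bigD1 (lift ord0 j)) //= fp_lift lerDl.
by apply: sumr_ge0 => i _; apply: mulr_ge0; [exact: fp_ge0 | exact: f_ge0].
Qed.

Lemma Uf_bound q bb x : in_hat_simplex q -> D x ->
  `|Uf f q bb x| <= \sum_(j < n) `|bb j|.
Proof.
move=> hq Dx; apply: (le_trans (ler_norm_sum _ _ _)); apply: ler_sum => j _.
rewrite normrM (ger0_norm (@post_ge0 q j x hq Dx)).
by rewrite -[X in _ <= X]mulr1 ler_wpM2l // (@post_le1 q j x hq Dx).
Qed.

Lemma E_ramp q bb al be : in_hat_simplex q ->
  expect_on a b (mix_density f q) (ramp al be \o Uf f q bb)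
  = (\int[mu]_(x in D) (Num.max (\sum_(i < n.+1) cc q bb al be i * f i x) 0)%:E)%E.
Proof.
move=> hq; apply: eq_integral => x; rewrite inE => Dx /=; by rewrite key.
Qed.

Lemma E_ramp_int q bb al be : in_hat_simplex q ->
  mu.-integrable D (fun x => (ramp al be (Uf f q bb x) * mix_density f q x)%:E).
Proof.
move=> hq; apply: (@eq_integrable _ _ _ mu D mD
   (fun x => (Num.max (\sum_(i < n.+1) cc q bb al be i * f i x) 0)%:E)); last exact: lin_int.
by move=> x; rewrite inE => Dx /=; rewrite key.
Qed.

Definition RE q bb al be :=
  fine (\int[mu]_(x in D) (Num.max (\sum_(i < n.+1) cc q bb al be i * f i x) 0)%:E)%E.

Lemma RE_E q bb al be :
  (\int[mu]_(x in D) (Num.max (\sum_(i < n.+1) cc q bb al be i * f i x) 0)%:E)%E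
  = (RE q bb al be)%:E.
Proof. by rewrite fineK // (@integrable_fin_num _ _ _ mu D mD _ (lin_int _)). Qed.

Lemma E_seq q bb s : in_hat_simplex q ->
  expect_on a b (mix_density f q) (phi s \o Uf f q bb)
  = (\sum_(k <- s) k.1.1 * RE q bb k.1.2 k.2)%:E.
Proof.
move=> hq; rewrite /expect_on.
transitivity (\int[mu]_(x in D) (\sum_(k <- s)
   (k.1.1 * (ramp k.1.2 k.2 (Uf f q bb x) * mix_density f q x))%:E))%E.
  apply: eq_integral => x _ /=; rewrite sumEFin /phi mulr_suml; congr EFin.
  by apply: eq_bigr => k _; rewrite mulrA.
rewrite (@integral_sum _ _ _ mu D mD _ (fun k x =>
   (k.1.1 * (ramp k.1.2 k.2 (Uf f q bb x) * mix_density f q x))%:E)); last first.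
  move=> k; apply: (@eq_integrable _ _ _ mu D mD
     (fun x => ((k.1.1)%:E * (ramp k.1.2 k.2 (Uf f q bb x) * mix_density f q x)%:E)%E)).
    by move=> x _; rewrite EFinM.
  by apply: integrableZl; [exact: mD | exact: (@E_ramp_int q bb _ _ hq)].
rewrite -sumEFin; apply: eq_bigr => k _.
transitivity (\int[mu]_(x in D)
   ((k.1.1)%:E * (ramp k.1.2 k.2 (Uf f q bb x) * mix_density f q x)%:E))%E.
  by apply: eq_integral => x _; rewrite EFinM.
rewrite integralZl; [|exact: mD|exact: (@E_ramp_int q bb _ _ hq)].
have := @E_ramp q bb k.1.2 k.2 hq; rewrite /expect_on /= => ->.
by rewrite RE_E EFinM.
Qed.


Lemma mean_E q j : in_hat_simplex q ->
  expect_on a b (mix_density f q) (posterior f q j)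
  = (\sum_(i < n.+1) cc q (fun l => (l == j)%:R) 0 1 i)%:E.
Proof.
move=> hq.
transitivity (expect_on a b (mix_density f q) (ramp 0 1 \o Uf f q (fun l => (l == j)%:R))).
  apply: eq_integral => x; rewrite inE => Dx /=; congr EFin; congr (_ * _).
  rewrite /ramp /Uf (bigD1 j) //= eqxx mul1r big1 ?addr0; last first.
    by move=> l /negbTE ->; rewrite mul0r.
  by rewrite add0r mul1r; apply/esym/max_idPl; exact: (@post_ge0 q j x hq Dx).
rewrite E_ramp // pos_int // => i; apply: mulr_ge0; first exact: fp_ge0.
rewrite add0r mul1r /ext; case: (unlift ord0 i) => [l|//].
by rewrite ler0n.
Qed.

Lemma RE_pos q bb al be : (forall i, 0 <= cc q bb al be i) ->
  RE q bb al be = \sum_(i < n.+1) cc q bb al be i.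
Proof. by move=> h; rewrite /RE pos_int. Qed.

End Exp.
Arguments RE {R n} a b f q bb al be.

Lemma le_sum_one {R : realType} {n : nat} (F : 'I_n -> R) j :
  (forall i, 0 <= F i) -> F j <= \sum_(i < n) F i.
Proof.
move=> h; rewrite (bigD1 j) //= lerDl; exact: sumr_ge0.
Qed.

Section Main.
Variables (R : realType) (n : nat) (xl xu yl yu : R) (f g : 'I_n.+1 -> R -> R).
Hypotheses (hF : is_experiment xl xu f) (hG : is_experiment yl yu g).
Local Notation mu := (@lebesgue_measure R).
Hypothesis H : forall bb : 'I_n.+1 -> R,
     (\int[lebesgue_measure]_(y in `[yl, yu]%classic)
         (Num.max (\sum_(i < n.+1) bb i * g i y) 0)%:E
      <= \int[lebesgue_measure]_(x in `[xl, xu]%classic)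
         (Num.max (\sum_(i < n.+1) bb i * f i x) 0)%:E)%E.

Lemma RE_le q bb al be :
  RE yl yu g q bb al be <= RE xl xu f q bb al be.
Proof.
have := H (cc q bb al be).
by rewrite (@RE_E _ _ _ _ _ hG) (@RE_E _ _ _ _ _ hF) lee_fin.
Qed.

Lemma cmp_seq q bb (s : seq (R * R * R)) :
  (forall k, k \in s -> 0 <= k.1.1 \/ (forall i, 0 <= cc q bb k.1.2 k.2 i)) ->
  \sum_(k <- s) k.1.1 * RE yl yu g q bb k.1.2 k.2
  <= \sum_(k <- s) k.1.1 * RE xl xu f q bb k.1.2 k.2.
Proof.
move=> hs; rewrite big_seq [X in _ <= X]big_seq; apply: ler_sum => k ks.
case: (hs k ks) => [w0|c0]; first by apply: ler_wpM2l => //; exact: RE_le.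
by rewrite (@RE_pos _ _ _ _ _ hG) // (@RE_pos _ _ _ _ _ hF).
Qed.


Lemma rngU (a b : R) (h : 'I_n.+1 -> R -> R) (hh : is_experiment a b h) q bb x :
  in_hat_simplex q -> `[a, b]%classic x ->
  - (\sum_(j < n) `|bb j| + 1) <= Uf h q bb x <= \sum_(j < n) `|bb j| + 1.
Proof.
move=> hq Dx; have := @Uf_bound _ _ _ _ _ hh q bb x hq Dx.
rewrite ler_norml => /andP[h1 h2].
by rewrite (le_trans _ h1) ?(le_trans h2) // ?lerDl ?ler01 // lerN2 lerDl ler01.
Qed.

Lemma cx_part q bb C : in_hat_simplex q -> convex_fun C ->
  (expect_on yl yu (mix_density g q) (C \o Uf g q bb)
   <= expect_on xl xu (mix_density f q) (C \o Uf f q bb))%E.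
Proof.
move=> hq hC.
set B := \sum_(j < n) `|bb j| + 1.
have B0 : 0 < B.
  by rewrite /B ltr_pwDr ?ltr01 // sumr_ge0 // => j _; exact: normr_ge0.
set slo := sl _ C (- B - 1) (- B).
set shi := sl _ C B (B + 1).
have Dd0 : 0 <= shi - slo.
  rewrite subr_ge0; apply: sl_mono => //; try lra.
apply/lee_addgt0Pr => e e0.
have [K HK] : exists K : nat, (shi - slo) * (2 * B) / e < K%:R.
  exists (Num.Def.archi_bound ((shi - slo) * (2 * B) / e)).
  apply: archi_boundP; apply: divr_ge0; last exact: ltW.
  by apply: mulr_ge0 => //; lra.
set h := 2 * B / (K.+1)%:R.
have NK : 0 < (K.+1)%:R :> R by rewrite ltr0n.
have h0 : 0 < h by rewrite /h divr_gt0 //; lra.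
have ht0 : tg _ B h 0 = - B by rewrite /tg mul0r addr0.
have htK : tg _ B h K.+1 = B.
  by rewrite /tg /h mulrC divfK ?lt0r_neq0 //; ring.
have Dh : (shi - slo) * h <= e.
  rewrite /h mulrA ler_pdivrMr //.
  move: HK; rewrite ltr_pdivrMr // => HK.
  have nK : (K.+1)%:R = K%:R + 1 :> R by rewrite -addn1 natrD.
  rewrite nK; nra.
pose s (c0 : R) : seq (R * R * R) :=
  (sg _ C B h 0, B, 1) :: (c0, 1, 0) ::
  [seq (sg _ C B h k.+1 - sg _ C B h k, - tg _ B h k.+1, 1) | k <- index_iota 0 K].
have phiE c0 u : - B <= u <= B -> phi (s c0) u = psi _ C B h K u - C (tg _ B h 0) + c0.
  move=> /andP[u1 u2].
  rewrite /phi /s big_cons big_cons big_map big_mkord /psi ht0.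
  have -> : ramp B 1 u = B + u by rewrite /ramp mul1r; apply/max_idPl; lra.
  have -> : ramp 1 0 u = 1 by rewrite /ramp mul0r addr0; apply/max_idPl; exact: ler01.
  have -> : \sum_(i < K) (sg _ C B h i.+1 - sg _ C B h i) * ramp (- tg _ B h i.+1) 1 u
      = \sum_(k < K) (sg _ C B h k.+1 - sg _ C B h k) * Num.max (u - tg _ B h k.+1) 0.
    by apply: eq_bigr => k _; congr (_ * _); rewrite /ramp mul1r addrC.
  simpl; ring.
have appr u : - B <= u <= B ->
    C u <= psi _ C B h K u /\ psi _ C B h K u <= C u + (shi - slo) * h.
  move=> hu; have := @approx _ C hC B h h0 K u.
  by rewrite ht0 htK => /(_ hu).
have hs c0 : forall k, k \in s c0 -> 0 <= k.1.1 \/ (forall i, 0 <= cc q bb k.1.2 k.2 i).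
  move=> k; rewrite !in_cons => /orP[/eqP ->|/orP[/eqP ->|]].
  - right => i; apply: mulr_ge0; first exact: fp_ge0.
    rewrite /= mul1r /ext; case: (unlift ord0 i) => [j|]; last by lra.
    have hj := le_sum_one (fun j => `|bb j|) j (fun j => normr_ge0 (bb j)).
    have := ler_norm (- bb j); rewrite normrN /B /=; move: hj => /= hj; lra.
  - right => i; apply: mulr_ge0; first exact: fp_ge0.
    by rewrite /= mul0r addr0 ler01.
  - move/mapP => [k' _ ->]; left; rewrite subr_ge0; exact: sg_mono.
have RE10 : RE xl xu f q bb 1 0 = 1.
  rewrite (@RE_pos _ _ _ _ _ hF).
    by rewrite -[RHS](fp_sum q); apply: eq_bigr => i _; rewrite /cc mul0r addr0 mulr1.
  by move=> i; rewrite /cc mul0r addr0 mulr1; exact: fp_ge0.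
set c0 := C (tg _ B h 0).
have E1 : (expect_on yl yu (mix_density g q) (C \o Uf g q bb)
     <= expect_on yl yu (mix_density g q) (phi (s c0) \o Uf g q bb))%E.
  apply: le_integral_nm => y Dy /=; rewrite lee_fin; apply: ler_wpM2r.
    exact: (@mix_ge0 _ _ _ _ _ hG q y hq Dy).
  have hu := @rngU _ _ _ hG q bb y hq Dy.
  by rewrite phiE // /c0 subrK; case: (appr _ hu).
have E2 : (expect_on xl xu (mix_density f q) (phi (s (c0 - (shi - slo) * h)%R) \o Uf f q bb)
     <= expect_on xl xu (mix_density f q) (C \o Uf f q bb))%E.
  apply: le_integral_nm => y Dy /=; rewrite lee_fin; apply: ler_wpM2r.
    exact: (@mix_ge0 _ _ _ _ _ hF q y hq Dy).
  have hu := @rngU _ _ _ hF q bb y hq Dy.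
  rewrite phiE // /c0 addrA subrK; case: (appr _ hu) => _; lra.
apply: (le_trans E1).
rewrite (@E_seq _ _ _ _ _ hG) //.
apply: (@le_trans _ _ (\sum_(k <- s c0) k.1.1 * RE xl xu f q bb k.1.2 k.2)%:E).
  by rewrite lee_fin; apply: cmp_seq; exact: hs.
have -> : \sum_(k <- s c0) k.1.1 * RE xl xu f q bb k.1.2 k.2
   = \sum_(k <- s (c0 - (shi - slo) * h)) k.1.1 * RE xl xu f q bb k.1.2 k.2
     + (shi - slo) * h.
  by rewrite /s big_cons big_cons [in RHS]big_cons [in RHS]big_cons /= RE10; ring.
rewrite EFinD; apply: leeD; last by rewrite lee_fin.
by rewrite -(@E_seq _ _ _ _ _ hF).
Qed.

End Main.

Theorem lemma1 (R : realType) (n : nat) (theta : 'I_n.+1 -> R)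
  (theta_inj : injective theta)
  (xl xu yl yu : R) (f g : 'I_n.+1 -> R -> R)
  (hF : is_experiment xl xu f) (hG : is_experiment yl yu g) :
  LB_ge xl xu f yl yu g <->
  (forall bb : 'I_n.+1 -> R,
     (\int[lebesgue_measure]_(y in `[yl, yu]%classic)
         (Num.max (\sum_(i < n.+1) bb i * g i y) 0)%:E
      <= \int[lebesgue_measure]_(x in `[xl, xu]%classic)
         (Num.max (\sum_(i < n.+1) bb i * f i x) 0)%:E)%E).
Proof.
split; last first.
  move=> H q hq; split.
    move=> j; rewrite (@mean_E _ _ _ _ _ hF) // (@mean_E _ _ _ _ _ hG) //.
  move=> bb C hC; exact: (@cx_part _ _ _ _ _ _ _ _ hF hG H q bb C hq hC).
move=> hLB bb.
pose N := (n.+1)%:R : R.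
have N0 : 0 < N by rewrite /N ltr0n.
have eN : N = n%:R + 1 by rewrite /N -addn1 natrD.
pose q : 'I_n -> R := fun _ => N^-1.
have sq : \sum_(j < n) q j = n%:R / N.
  by rewrite /q big_const_ord iter_addr addr0 mulr_natl.
have hq : in_hat_simplex q.
  split => [j|]; first by rewrite /q invr_ge0 ltW.
  by rewrite sq ler_pdivrMr // mul1r eN lerDl ler01.
pose bb' : 'I_n -> R := fun j => bb (lift ord0 j) - bb ord0.
pose Cf (u : R) := N * ramp (bb ord0) 1 u.
have hC : convex_fun Cf.
  rewrite /convex_fun => x y t /andP[t0 t1]; rewrite /Cf /ramp.
  set M1 := Num.max (bb ord0 + 1 * x) 0.
  set M2 := Num.max (bb ord0 + 1 * y) 0.
  have h1 : bb ord0 + 1 * x <= M1 by rewrite le_max lexx.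
  have h2 : bb ord0 + 1 * y <= M2 by rewrite le_max lexx.
  have h3 : 0 <= M1 by rewrite le_max lexx orbT.
  have h4 : 0 <= M2 by rewrite le_max lexx orbT.
  have hm : Num.max (bb ord0 + 1 * (t * x + (1 - t) * y)) 0 <= t * M1 + (1 - t) * M2.
    rewrite ge_max; apply/andP; split; nra.
  have := ler_wpM2l (ltW N0) hm; nra.
have cc_unif i : cc q bb' (bb ord0) 1 i = bb i / N.
  rewrite /cc; case: (unliftP ord0 i) => [j ->|->].
    by rewrite fp_lift /ext liftK /bb' /q mul1r addrC subrK mulrC.
  rewrite fp_ord0 /ext unlift_none mulr0 addr0 sq.
  have -> : 1 - n%:R / N = N^-1 by rewrite eN; field; rewrite -eN lt0r_neq0.
  by rewrite mulrC.
have eqI (a b : R) (h : 'I_n.+1 -> R -> R) (hh : is_experiment a b h) :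
    (\int[lebesgue_measure]_(x in `[a, b]%classic)
         (Num.max (\sum_(i < n.+1) bb i * h i x) 0)%:E)%E
    = expect_on a b (mix_density h q) (Cf \o Uf h q bb').
  apply: eq_integral => x; rewrite inE => Dx /=; congr EFin.
  rewrite /Cf -mulrA (@key _ _ _ _ _ hh q bb' (bb ord0) 1 x hq Dx).
  have -> : \sum_(i < n.+1) cc q bb' (bb ord0) 1 i * h i x
      = N^-1 * \sum_(i < n.+1) bb i * h i x.
    by rewrite mulr_sumr; apply: eq_bigr => i _; rewrite cc_unif mulrAC mulrC.
  rewrite -[X in N * Num.max _ X](mulr0 N^-1) -maxr_pMr ?invr_ge0 ?ltW //.
  by rewrite mulrA mulfV ?mul1r //; exact: lt0r_neq0.
rewrite (eqI _ _ _ hG) (eqI _ _ _ hF).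
exact: ((hLB q hq).2 bb' Cf hC).
Qed.
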